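(* Let $d>0$, $a\geq 7$ be integers with $\gcd(a,d)=1$ and let $\Gamma_4=\langle a,\,2a+d,\,3a+3d,\,4a+6d\rangle$. For each $1\leq i\leq a-1$ write $i=6\mu_i+q_i$ with $0\leq q_i<6$, and set $(\nu_i,\xi_i)=(1,q_i-3)$ if $q_i\geq 3$ and $(\nu_i,\xi_i)=(0,q_i)$ if $q_i<3$. Then $$\mathrm{Ap}(\Gamma_4,a)=\{0\}\cup\{(4\mu_i+3\nu_i+2\xi_i)a+id \mid 1\leq i\leq a-1\}.$$
   Context: For a numerical semigroup $\Gamma$ and nonzero $a\in\Gamma$, the Apéry set is $\mathrm{Ap}(\Gamma,a)=\{s\in\Gamma\mid s-a\notin\Gamma\}$. *)

(* Defs.v *)
From mathcomp Require Import all_boot.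
Set Implicit Arguments. Unset Strict Implicit. Unset Printing Implicit Defensive.

Definition in_semigroup (gens : seq nat) (s : nat) : Prop :=
  exists c : nat -> nat, s = \sum_(i < size gens) c i * nth 0 gens i.

(* Apéry set Ap(Γ, a) = { s ∈ Γ | s - a ∉ Γ } (difference taken in Z,
   so s - a ∈ Γ means s = t + a for some t ∈ Γ). *)
Definition apery (gens : seq nat) (a : nat) (s : nat) : Prop :=
  in_semigroup gens s /\ ~ (exists t, in_semigroup gens t /\ s = t + a).

Definition gamma4 (a d : nat) : seq nat :=
  [:: a; 2 * a + d; 3 * a + 3 * d; 4 * a + 6 * d].

Definition mu (i : nat) : nat := i %/ 6.
Definition qq (i : nat) : nat := i %% 6.
Definition nu (i : nat) : nat := if 3 <= qq i then 1 else 0.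
Definition xi (i : nat) : nat := if 3 <= qq i then qq i - 3 else qq i.

(* Main.v *)
Require Import Defs.
From mathcomp Require Import all_boot zify.
Definition w n := 4 * mu n + 3 * nu n + 2 * xi n.
Lemma w_lo n : 2 * n <= 3 * w n.
Proof. rewrite /w /nu /xi /mu /qq; case: ifP => ?; lia. Qed.
Lemma w_hi n : 3 * w n <= 2 * n + 11.
Proof. rewrite /w /nu /xi /mu /qq; case: ifP => ?; lia. Qed.
Lemma w1 n : w n.+1 <= w n + 2.
Proof. rewrite /w /nu /xi /mu /qq; do 2 case: ifP => ?; lia. Qed.
Lemma w3 n : w (n + 3) <= w n + 3.
Proof. rewrite /w /nu /xi /mu /qq; do 2 case: ifP => ?; lia. Qed.
Lemma w6 n : w (n + 6) <= w n + 4.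
Proof. rewrite /w /nu /xi /mu /qq; do 2 case: ifP => ?; lia. Qed.
Lemma w0 : w 0 = 0. Proof. by []. Qed.
Lemma wmin c1 c2 c3 : w (c1 + 3*c2 + 6*c3) <= 2*c1+3*c2+4*c3.
Proof.
elim: c3 => [|k IH].
  elim: c2 => [|m IH].
    elim: c1 => [|n IH]; first by rewrite w0.
    have := w1 (n + 3*0 + 6*0). have -> : (n + 3*0 + 6*0).+1 = n.+1 + 3*0 + 6*0 by lia. lia.
  have := w3 (c1 + 3*m + 6*0). have -> : c1 + 3*m + 6*0 + 3 = c1 + 3*m.+1 + 6*0 by lia. lia.
have := w6 (c1 + 3*c2 + 6*k). have -> : c1 + 3*c2 + 6*k + 6 = c1 + 3*c2 + 6*k.+1 by lia. lia.
Qed.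
Lemma wdec B : B = xi B + 3 * nu B + 6 * mu B.
Proof. rewrite /nu /xi /mu /qq; case: ifP => ?; lia. Qed.
Lemma inG a d s : in_semigroup (gamma4 a d) s <-> exists A B, w B <= A /\ s = A*a + B*d.
Proof.
split.
  move=> [c ->]; rewrite /= !big_ord_recr big_ord0 /=.
  set c0 := c _; set c1 := c _; set c2 := c _; set c3 := c _.
  exists (c0 + 2*c1+3*c2+4*c3), (c1 + 3*c2 + 6*c3); split.
    have := wmin c1 c2 c3; lia.
  lia.
move=> [A [B [hA ->]]].
exists (nth 0 [:: A - w B; xi B; nu B; mu B]).
rewrite /= !big_ord_recr big_ord0 /=.
have hB := wdec B.
have [e ->] : exists e, A = w B + e by exists (A - w B); lia.
rewrite /w; move: (xi B) (nu B) (mu B) hB => x n m ->.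
have -> : 4 * m + 3 * n + 2 * x + e - (4 * m + 3 * n + 2 * x) = e by lia.
lia.
Qed.

Theorem theorem2p2 (a d : nat) :
  0 < d -> 7 <= a -> coprime a d ->
  forall s : nat,
    apery (gamma4 a d) a s <->
    (s = 0 \/
     exists i : nat, 1 <= i <= a - 1 /\
       s = (4 * mu i + 3 * nu i + 2 * xi i) * a + i * d).
Proof.
move=> hd ha hco s; split.
  move=> [hs hn]; move/inG: hs => [A [B [hA hs]]].
  case: (ltnP (w B) A) => hAB.
    exfalso; apply: hn.
    have [A' eA] : exists A', A = A'.+1 by exists A.-1; lia.
    exists (A' * a + B * d); split.
      apply/inG; exists A', B; split; lia.
    rewrite hs eA mulSn; lia.
  have eA : A = w B by lia.
  rewrite {}eA in hs hA hAB.
  have [eB0|hB0] := eqVneq B 0.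
    by left; rewrite hs eB0 w0.
  case: (ltnP B a) => hBa.
    right; exists B; split; first lia.
    by rewrite hs.
  exfalso; apply: hn.
  have [B' eB] : exists B', B = a + B' by exists (B - a); lia.
  have hw1 := w_lo B; have hw2 := w_hi B'.
  have [W' eW] : exists W', w B = W'.+1 by exists (w B).-1; lia.
  exists ((W' + d) * a + B' * d); split.
    apply/inG; exists (W' + d), B'; split; lia.
  rewrite hs eW eB mulSn !mulnDl; lia.
case=> [->|[i [hi ->]]].
  split; first by apply/inG; exists 0, 0; rewrite w0.
  by move=> [t [_ e]]; lia.
split; first by apply/inG; exists (w i), i.
move=> [t [/inG [A [B [hA ->]]] e]].
rewrite -/(w i) in e.
have ha0 : 0 < a by lia.
case: (ltngtP B i) => hBi.
- have [k eB] : exists k, i = B + k by exists (i - B); lia.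
  have h : k * d + w i * a = (A + 1) * a by rewrite mulnDl; move: e; rewrite eB mulnDl; lia.
  have : a %| k * d + w i * a by rewrite h dvdn_mull.
  rewrite (dvdn_addl _ (dvdn_mull _ (dvdnn a))) Gauss_dvdl // => /dvdn_leq; lia.
- have [k eB] : exists k, B = i + k by exists (B - i); lia.
  have h : w i * a = (A + 1) * a + k * d by rewrite mulnDl; move: e; rewrite eB mulnDl; lia.
  have : a %| (A + 1) * a + k * d by rewrite -h dvdn_mull.
  rewrite (dvdn_addr _ (dvdn_mull _ (dvdnn a))) Gauss_dvdl // => /dvdn_leq hk.
  have hk' : a <= k by apply: hk; lia.
  have hkd : a * d <= k * d by apply: leq_mul.
  have : (A + 1 + d) * a <= w i * a by rewrite h !mulnDl (mulnC d a); lia.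
  rewrite leq_pmul2r // => hw.
  have := w_hi i; have := w_lo B; lia.
- subst B.
  have : w i * a = (A + 1) * a by rewrite mulnDl; lia.
  move/eqP; rewrite eqn_pmul2r // => /eqP; lia.
Qed.
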